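(* If $\phi\in\mathcal{I}$, then $\lim_{r\to\infty}\frac{\phi(r)}{r^2}=\infty$.
   Context: The class $\mathcal{I}$: $\phi:[0,\infty)\to(0,\infty)$ is twice continuously differentiable, extended by $\phi(z)=\phi(|z|)$, with $\Delta\phi>0$, and there exist a positive differentiable radial $\tau$ and a constant $C>0$ with $\tau(z)=C$ for $|z|<1$ and $C^{-1}(\Delta\phi(|z|))^{-1/2}\le\tau(z)\le C(\Delta\phi(|z|))^{-1/2}$ for $|z|\ge1$; $\tau(z)\to0$ as $|z|\to\infty$, $\tau'(r)\to0$, and either $\tau(r)r^{c}$ increases for large $r$ for some $c>0$ or $\lim_{r\to\infty}\tau'(r)\log\frac1{\tau(r)}=0$. *)

(* Defs.v *)
From Stdlib Require Import Reals.
From Coquelicot Require Import Coquelicot.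
Open Scope R_scope.

(* Laplacian of the radial function z |-> phi(|z|) on C = R^2, written
   in polar form at radius r > 0:  Delta phi (r) = phi''(r) + phi'(r)/r. *)
Definition lap_rad (phi : R -> R) (r : R) : R :=
  Derive_n phi 2 r + Derive phi r / r.

Definition C2_pos (phi : R -> R) : Prop :=
  forall r, 0 < r ->
    ex_derive phi r /\ ex_derive (Derive phi) r /\ continuous (Derive_n phi 2) r.

(* The class I. The radial functions are represented by their profiles
   on [0, oo); tau is the profile of the radial weight tau(z) = tau(|z|). *)
Definition class_I (phi : R -> R) : Prop :=
  C2_pos phi /\
  (forall r, 0 <= r -> 0 < phi r) /\
  (forall r, 0 < r -> 0 < lap_rad phi r) /\
  exists (tau : R -> R) (C : R),
    0 < C /\
    (forall r, 0 <= r -> 0 < tau r) /\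
    (forall r, 0 < r -> ex_derive tau r) /\
    (forall r, 0 <= r < 1 -> tau r = C) /\
    (forall r, 1 <= r ->
        / C * / sqrt (lap_rad phi r) <= tau r /\
        tau r <= C * / sqrt (lap_rad phi r)) /\
    is_lim tau p_infty 0 /\
    is_lim (Derive tau) p_infty 0 /\
    ((exists c, 0 < c /\ exists R0, 0 < R0 /\
        forall r s, R0 <= r -> r <= s ->
          tau r * Rpower r c <= tau s * Rpower s c)
     \/ is_lim (fun r => Derive tau r * ln (/ tau r)) p_infty 0).

(* Main.v *)
Require Import Defs.
From Stdlib Require Import Reals.
From Coquelicot Require Import Coquelicot.
From Stdlib Require Import Lra Psatz.
Open Scope R_scope.

Lemma mono_aux (f df : R -> R) a :
  (forall x, a <= x -> is_derive f x (df x)) ->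
  (forall x, a <= x -> 0 <= df x) ->
  forall r s, a <= r -> r <= s -> f r <= f s.
Proof.
  intros Hd Hp r s Hr Hrs.
  destruct (MVT_gen f r s df) as [c [Hc Heq]].
  - intros x Hx. apply Hd. pose proof (Rmin_l r s). pose proof (Rmin_r r s).
    unfold Rmin in *. destruct (Rle_dec r s); lra.
  - intros x Hx. apply continuity_pt_filterlim. apply (ex_derive_continuous (K:=R_AbsRing) (V:=R_NormedModule)).
    eexists. apply Hd. unfold Rmin in *. destruct (Rle_dec r s); lra.
  - assert (0 <= df c).
    { apply Hp. unfold Rmin in *. destruct (Rle_dec r s); lra. }
    nra.
Qed.

Theorem lemma2p6 (phi : R -> R) :
  class_I phi -> is_lim (fun r => phi r / r ^ 2) p_infty p_infty.
Proof.
  intros [HC2 [Hpos [Hlap [tau [C [HCpos [Htpos [_ [_ [Hbnd [Htau _]]]]]]]]]]].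
  assert (Step1 : forall M, 0 < M -> exists R1, 1 <= R1 /\
            forall r, R1 <= r -> M < lap_rad phi r).
  { intros M HM.
    apply is_lim_spec in Htau. simpl in Htau.
    assert (He : 0 < / (C * (M + 1))).
    { apply Rinv_0_lt_compat. nra. }
    destruct (Htau (mkposreal _ He)) as [R0 HR0]. simpl in HR0.
    exists (Rmax R0 1 + 1). split. { pose proof (Rmax_r R0 1). lra. }
    intros r Hr.
    assert (H1 : R0 < r) by (pose proof (Rmax_l R0 1); lra).
    assert (H2 : 1 <= r) by (pose proof (Rmax_r R0 1); lra).
    specialize (HR0 r H1). rewrite Rminus_0_r in HR0.
    assert (Ht := Htpos r ltac:(lra)).
    rewrite Rabs_pos_eq in HR0 by lra.
    destruct (Hbnd r H2) as [Hb _].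
    assert (HL := Hlap r ltac:(lra)).
    assert (Hs := sqrt_lt_R0 _ HL).
    assert (Hss := sqrt_sqrt _ (Rlt_le _ _ HL)).
    set (s := sqrt (lap_rad phi r)) in *.
    assert (Hk : / C * / s < / (C * (M + 1))) by lra.
    rewrite <- Rinv_mult in Hk.
    apply Rinv_lt_contravar in Hk.
    2: { apply Rmult_lt_0_compat; apply Rinv_0_lt_compat; nra. }
    rewrite !Rinv_inv in Hk.
    assert (M + 1 < s) by nra.
    nra. }
  apply is_lim_spec. simpl. intros N.
  set (M := 8 * (Rabs N + 1)).
  assert (HM : 0 < M) by (unfold M; pose proof (Rabs_pos N); lra).
  destruct (Step1 M HM) as [R1 [HR1 HL]].
  set (g := fun r => r * Derive phi r - M / 2 * r ^ 2).
  assert (Hg : forall r, R1 <= r -> g R1 <= g r).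
  { intros r Hr.
    apply (mono_aux g (fun x => x * (lap_rad phi x - M)) R1); try lra.
    - intros x Hx. destruct (HC2 x ltac:(lra)) as [D1 [D2 _]].
      unfold g.
      auto_derive. { repeat split; auto. }
      unfold lap_rad. change (Derive_n phi 2 x) with (Derive (Derive phi) x).
      change (Derive (fun x0 : R => Derive phi x0) x) with (Derive (Derive phi) x). field. lra.
    - intros x Hx. specialize (HL x Hx). nra. }
  set (A := g R1).
  set (K := Rabs A).
  set (h := fun r => phi r - M / 4 * r ^ 2 + K * r).
  assert (Hh : forall r, R1 <= r -> h R1 <= h r).
  { intros r Hr.
    apply (mono_aux h (fun x => Derive phi x - M / 2 * x + K) R1); try lra.
    - intros x Hx. destruct (HC2 x ltac:(lra)) as [D1 [D2 _]].
      unfold h.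
      auto_derive. { repeat split; auto. }
      change (Derive (fun x0 : R => phi x0) x) with (Derive phi x). field.
    - intros x Hx. specialize (Hg x Hx). fold A in Hg. unfold g in Hg.
      assert (HA : - K <= A) by (unfold K; pose proof (Rabs_le_between' A A 0); 
                                 pose proof (Rle_abs (-A)); rewrite Rabs_Ropp in *; lra).
      assert (0 <= K) by apply Rabs_pos.
      assert (x * (Derive phi x - M / 2 * x + K) >= 0) by nra.
      nra. }
  set (B := h R1).
  exists (R1 + K + Rabs B + 1). intros r Hr.
  assert (0 <= K) by apply Rabs_pos.
  pose proof (Rabs_pos B). pose proof (Rle_abs (-B)). rewrite Rabs_Ropp in *.
  pose proof (Rabs_pos N). pose proof (Rle_abs N).
  specialize (Hh r ltac:(lra)). fold B in Hh. unfold h in Hh.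
  assert (Hr2 : 0 < r ^ 2) by nra.
  apply (Rmult_lt_reg_r (r ^ 2)); auto.
  unfold Rdiv. rewrite Rmult_assoc, Rinv_l by lra. rewrite Rmult_1_r.
  unfold M in Hh.
  assert (r * r >= r * (K + Rabs B + 1)) by nra.
  nra.
Qed.
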